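(* For every finite set $\Omega$ with $|\Omega|\ge2$ and every $\varepsilon>0$ there exist $\delta>0$ and $n_0>0$ such that for all $n>n_0$ and all $\mu,\mu',\nu,\nu'\in\mathcal P(\Omega^n)$: if $D_\square(\mu,\mu')+D_\square(\nu,\nu')<\delta$, then $D_\square(\mu\otimes\nu,\mu'\otimes\nu')<\varepsilon$, where the product measures are regarded as elements of $\mathcal P((\Omega\times\Omega)^n)$ and the cut metric on the left is taken with spin set $\Omega\times\Omega$.
   Context: $\mathcal P(\mathcal X)$ denotes the set of probability measures on a finite set $\mathcal X$; $[n]=\{1,\dots,n\}$. For $\mu,\nu\in\mathcal P(\Omega^n)$, $\mu\otimes\nu$ is the law of $(\sigma,\tau)$ with $\sigma\sim\mu,\tau\sim\nu$ independent, identified with the configuration $((\sigma_1,\tau_1),\dots,(\sigma_n,\tau_n))\in(\Omega\times\Omega)^n$. For a finite spin set $\Omega$ and $\mu,\nu\in\mathcal P(\Omega^n)$ let $\Gamma(\mu,\nu)$ be the set of couplings, i.e. probability measures $\gamma$ on $\Omega^n\times\Omega^n$ whose first and second marginals are $\mu$ and $\nu$. The cut metric is $D_\square(\mu,\nu)=\frac1n\min_{\gamma\in\Gamma(\mu,\nu)}\max_{I\subset[n],\,B\subset\Omega^n\times\Omega^n,\,\omega\in\Omega}\Big|\sum_{i\in I}\sum_{(\sigma,\tau)\in B}\gamma(\sigma,\tau)\big(\mathbf 1\{\sigma_i=\omega\}-\mathbf 1\{\tau_i=\omega\}\big)\Big|$. *)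

(* Defs.v *)
From mathcomp Require Import all_boot.
From Stdlib Require Import Reals ClassicalEpsilon.

Set Implicit Arguments.
Unset Strict Implicit.
Unset Printing Implicit Defensive.

Definition config (Om : finType) (n : nat) : finType := {ffun 'I_n -> Om}.

Definition meas (X : finType) := {ffun X -> R}.

Definition rsum (X : finType) (f : X -> R) : R := \big[Rplus/0%R]_(x : X) f x.

Definition is_prob (X : finType) (mu : meas X) : Prop :=
  (forall x, (0 <= mu x)%R) /\ rsum (fun x => mu x) = 1%R.

Definition is_coupling (Om : finType) (n : nat)
  (mu nu : meas (config Om n)) (g : meas (prod (config Om n) (config Om n))) : Prop :=
  (forall st, (0 <= g st)%R) /\
  (forall s, rsum (fun t => g (s, t)) = mu s) /\
  (forall t, rsum (fun s => g (s, t)) = nu t).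

Definition ind (b : bool) : R := if b then 1%R else 0%R.

Definition cut_val (Om : finType) (n : nat)
  (g : meas (prod (config Om n) (config Om n))) : R :=
  \big[Rmax/0%R]_(I : {set 'I_n})
   \big[Rmax/0%R]_(B : {set prod (config Om n) (config Om n)})
    \big[Rmax/0%R]_(w : Om)
      Rabs (\big[Rplus/0%R]_(i in I) \big[Rplus/0%R]_(st in B)
              (g st * (ind ((st.1 i) == w) - ind ((st.2 i) == w)))%R).

Definition is_min_cut (Om : finType) (n : nat) (mu nu : meas (config Om n)) (m : R) : Prop :=
  (exists g, is_coupling mu nu g /\ cut_val g = m) /\
  (forall g, is_coupling mu nu g -> (m <= cut_val g)%R).

(* Cut metric D_square(mu, nu) = (1/n) min_{gamma} max_{I,B,omega} |...| *)
Definition D_cut (Om : finType) (n : nat) (mu nu : meas (config Om n)) : R :=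
  (/ INR n * epsilon (inhabits 0%R) (is_min_cut mu nu))%R.

Definition prod_meas (Om : finType) (n : nat) (mu nu : meas (config Om n))
  : meas (config (prod Om Om) n) :=
  [ffun x : config (prod Om Om) n =>
     (mu [ffun i => (x i).1] * nu [ffun i => (x i).2])%R].

(* Main.v *)
Require Import Defs.
From mathcomp Require Import all_boot.
From Stdlib Require Import Reals Lra ClassicalEpsilon.
From mathcomp Require Import all_algebra.
From mathcomp Require Import boolp classical_sets topology normedtype derive.
From mathcomp Require Import Rstruct Rstruct_topology.
Import ArrowAsProduct.
Import Defs.
Set Implicit Arguments.
Unset Strict Implicit.
Unset Printing Implicit Defensive.

Section PartB.

Section Cont.
Variable T : topologicalType.
Implicit Types Phi Psi : T -> R.

Lemma cont_plus Phi Psi : continuous Phi -> continuous Psi ->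
  continuous (fun x => Rplus (Phi x) (Psi x)).
Proof. move=> h1 h2 x. 
have := @continuousD R R^o T Phi Psi x (h1 x) (h2 x). by [].
Qed.
Lemma cont_mult Phi Psi : continuous Phi -> continuous Psi ->
  continuous (fun x => Rmult (Phi x) (Psi x)).
Proof. move=> h1 h2 x; have := @continuousM R T Phi Psi x (h1 x) (h2 x); by []. Qed.

Lemma cont_cst (c : R) : continuous (fun _ : T => c).
Proof. by move=> x; exact: cvg_cst. Qed.

Lemma cont_opp Phi : continuous Phi -> continuous (fun x => Ropp (Phi x)).
Proof. move=> h1 x; exact: (@continuousN R R^o T Phi x (h1 x)). Qed.

Lemma cont_abs Phi : continuous Phi -> continuous (fun x => Rabs (Phi x)).
Proof.
move=> h1; rewrite (_ : (fun x => Rabs (Phi x)) = (fun x => `|Phi x|%R)); last first.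
  by apply: funext => x; rewrite RabsE.
move=> x; apply: continuous_comp; [exact: h1 | have := @norm_continuous R R^o (Phi x); by []].
Qed.
End Cont.

Section Cont2.
Variable T : topologicalType.
Implicit Types Phi Psi : T -> R.

Lemma Rmax_formula a b : Rmax a b = Rmult (Rplus (Rplus a b) (Rabs (Rminus a b))) (/ 2).
Proof.
unfold Rmax; destruct (Rle_dec a b).
- rewrite Rabs_left1; [field|lra].
- rewrite Rabs_right; [field|lra].
Qed.

Lemma cont_max Phi Psi : continuous Phi -> continuous Psi ->
  continuous (fun x => Rmax (Phi x) (Psi x)).
Proof.
move=> h1 h2.
rewrite (_ : (fun x => Rmax (Phi x) (Psi x)) = (fun x => Rmult (Rplus (Rplus (Phi x) (Psi x)) (Rabs (Rplus (Phi x) (Ropp (Psi x))))) (/ 2))); last first.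
  by apply: funext => x; rewrite Rmax_formula.
apply: cont_mult; last exact: cont_cst.
apply: cont_plus; first exact: cont_plus.
apply: cont_abs; apply: cont_plus => //; exact: cont_opp.
Qed.

Lemma cont_big (op : R -> R -> R) (x0 : R)
  (hop : forall Phi Psi, continuous Phi -> continuous Psi -> continuous (fun x => op (Phi x) (Psi x)))
  (I : Type) (r : seq I) (P : pred I) (F : I -> T -> R) :
  (forall i, continuous (F i)) -> continuous (fun x => \big[op/x0]_(i <- r | P i) F i x).
Proof.
move=> hF; elim: r => [|i r IH].
  rewrite (_ : (fun x => _) = (fun _ => x0)); first exact: cont_cst.
  by apply: funext => x; rewrite big_nil.
rewrite (_ : (fun x => _) = (fun x => if P i then op (F i x) (\big[op/x0]_(j <- r | P j) F j x) else \big[op/x0]_(j <- r | P j) F j x)); last first.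
  by apply: funext => x; rewrite big_cons.
by case: (P i) => //; apply: hop.
Qed.
End Cont2.

Section Exist.
Variables (Om : finType) (n : nat) (mu nu : meas (config Om n)).
Let K := (config Om n * config Om n)%type.

Definition Phi (f : K -> R) : R := cut_val (finfun f : meas K).

Lemma cont_proj (k : K) : continuous (fun f : K -> R => f k).
Proof. exact: proj_continuous. Qed.

Lemma Phi_cont : continuous Phi.
Proof.
rewrite /Phi /cut_val.
apply: cont_big => [|I]; first exact: cont_max.
apply: cont_big => [|B]; first exact: cont_max.
apply: cont_big => [|w]; first exact: cont_max.
apply: cont_abs.
apply: cont_big => [|i]; first exact: cont_plus.
apply: cont_big => [|st]; first exact: cont_plus.
apply: cont_mult; last exact: cont_cst.
rewrite (_ : (fun x => _) = (fun f : K -> R => f st)); first exact: cont_proj.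
by apply: funext => f; rewrite ffunE.
Qed.
End Exist.

End PartB.

Section PartB2.
Local Open Scope classical_set_scope.

Lemma sum_ge0 (X : finType) (P : pred X) (F : X -> R) :
  (forall x, Rle 0 (F x)) -> Rle 0 (\big[Rplus/0%R]_(x | P x) F x).
Proof.
move=> h; elim/big_ind: _ => //; [exact: Rle_refl|].
move=> a b ha hb; lra.
Qed.

Lemma le_sum_term (X : finType) (F : X -> R) (x0 : X) :
  (forall x, Rle 0 (F x)) -> Rle (F x0) (\big[Rplus/0%R]_x F x).
Proof.
move=> h; rewrite (bigD1 x0) //=.
rewrite -{1}(Rplus_0_r (F x0)); apply: Rplus_le_compat_l; exact: sum_ge0.
Qed.

Section Exist2.
Variables (Om : finType) (n : nat) (mu nu : meas (config Om n)).
Let K := (config Om n * config Om n)%type.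

Definition Qs : set (K -> R) := [set f | is_coupling mu nu (finfun f : meas K)].

Let M := rsum (fun s => mu s).

Lemma Qs_box : Qs `<=` [set f : K -> R | forall k, `[0%R, M]%classic (f k)].
Proof.
move=> f [h1 [h2 h3]] k /=.
have g0 : forall k, Rle 0 (f k) by move=> k'; have := h1 k'; rewrite ffunE.
have mu0 : forall s, Rle 0 (mu s).
  by move=> s; rewrite -h2; apply: sum_ge0 => t; rewrite ffunE.
rewrite in_itv /=; apply/andP; split; apply/RleP; first exact: g0.
case: k => s t.
apply: Rle_trans (_ : Rle (mu s) M).
  rewrite -h2; have := @le_sum_term _ (fun t' => (finfun f : meas K) (s, t')) t.
  by rewrite ffunE; apply => t'; rewrite ffunE.
exact: le_sum_term.
Qed.

Lemma Qs_closed : closed Qs.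
Proof.
have -> : Qs = \bigcap_(k in setT) ((fun f : K -> R => f k) @^-1` [set x | (0 <= x)%R])
  `&` \bigcap_(s in setT) ((fun f : K -> R => rsum (fun t => f (s, t))) @^-1` [set x | x = mu s])
  `&` \bigcap_(t in setT) ((fun f : K -> R => rsum (fun s => f (s, t))) @^-1` [set x | x = nu t]).
  apply/seteqP; split => f.
    move=> [h1 [h2 h3]]; split; [split|].
    - by move=> k _ /=; apply/RleP; have := h1 k; rewrite ffunE.
    - move=> s _ /=; rewrite -h2; apply: eq_bigr => t _; by rewrite ffunE.
    - move=> t _ /=; rewrite -h3; apply: eq_bigr => s _; by rewrite ffunE.
  move=> [[h1 h2] h3]; split; [|split].
  - by move=> k; rewrite ffunE; apply/RleP; exact: h1.
  - move=> s; rewrite -(h2 s I); apply: eq_bigr => t _; by rewrite ffunE.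
  - move=> t; rewrite -(h3 t I); apply: eq_bigr => s _; by rewrite ffunE.
apply: closedI; first apply: closedI.
- apply: closed_bigI => k _; apply: preimage_closed; last exact: closed_ge.
  by move=> f _; apply: cont_proj.
- apply: closed_bigI => s _; apply: preimage_closed; last exact: closed_eq.
  move=> f _; apply: cont_big => [|t]; [exact: cont_plus|exact: cont_proj].
- apply: closed_bigI => t _; apply: preimage_closed; last exact: closed_eq.
  move=> f _; apply: cont_big => [|s]; [exact: cont_plus|exact: cont_proj].
Qed.

Lemma Qs_compact : compact Qs.
Proof.
apply: subclosed_compact; [exact: Qs_closed| |exact: Qs_box].
have seg : compact (`[0%R, M]%classic : set R) by apply: segment_compact.
have := (@tychonoff K (fun _ => R) (fun _ => `[0%R, M]%classic) (fun _ => seg)).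
exact.
Qed.

Lemma min_exists : (exists g, is_coupling mu nu g) -> exists m, is_min_cut mu nu m.
Proof.
move=> [g hg].
have Q0 : Qs !=set0.
  exists (fun k => g k); rewrite /Qs /=.
  by rewrite (_ : finfun _ = g) //; apply/ffunP => k; rewrite ffunE.
have cP : {within Qs, continuous (@Phi Om n)} by apply: continuous_subspaceT; exact: Phi_cont.
have [c cQ cmin] := compact_EVT_min Q0 Qs_compact cP.
exists (@Phi Om n c); split.
  exists (finfun (c : K -> R) : meas K); split => //; by move: cQ; rewrite inE.
move=> g' hg'.
have := cmin (fun k => g' k).
rewrite /Phi (_ : finfun (fun k => g' k) = g'); last by apply/ffunP => k; rewrite ffunE.
move=> h; apply/RleP; apply: h; rewrite inE /Qs /= (_ : finfun _ = g') //; apply/ffunP => k; by rewrite ffunE.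
Qed.
End Exist2.

End PartB2.

Section PartA.
Local Open Scope R_scope.

Lemma ind_and (a b : bool) : ind (a && b)%B = ind a * ind b.
Proof. by case: a; case: b; rewrite /ind /=; ring. Qed.

Lemma ind_ge0 b : 0 <= ind b.
Proof. case: b; rewrite /ind; lra. Qed.

Lemma sum_cond (X : finType) (A : {set X}) (F : X -> R) :
  \big[Rplus/0]_(i in A) F i = \big[Rplus/0]_i (ind (i \in A) * F i).
Proof. rewrite big_mkcond; apply: eq_bigr => i _; case: (i \in A); rewrite /ind; ring. Qed.

Lemma bigmax_le (X : finType) (F : X -> R) c :
  0 <= c -> (forall x, F x <= c) -> \big[Rmax/0]_x F x <= c.
Proof. move=> c0 h; elim/big_ind: _ => // a b ha hb; exact: Rmax_lub. Qed.

Lemma le_bigmax_seq (X : eqType) (r : seq X) (F : X -> R) x :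
  x \in r -> F x <= \big[Rmax/0]_(i <- r) F i.
Proof.
elim: r => [|y r IH] //; rewrite big_cons inE => /orP [/eqP ->|hx].
  exact: Rmax_l.
apply: Rle_trans (IH hx) _; exact: Rmax_r.
Qed.

Lemma le_bigmax (X : finType) (F : X -> R) x : F x <= \big[Rmax/0]_x F x.
Proof. apply: le_bigmax_seq; exact: mem_index_enum. Qed.

Lemma bigmax_ge0 (X : finType) (F : X -> R) :
  (forall x, 0 <= F x) -> 0 <= \big[Rmax/0]_x F x.
Proof.
move=> h; elim/big_ind: _ => //; first lra.
move=> a b ha hb; apply: Rle_trans ha _; exact: Rmax_l.
Qed.

Section Prod.
Variables (Om : finType) (n : nat).
Local Notation C := (config Om n).
Local Notation P := (config (prod Om Om) n).

Definition pr (x y : C) : P := [ffun i => (x i, y i)].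
Definition fc (x : P) : C := [ffun i => (x i).1].
Definition sc (x : P) : C := [ffun i => (x i).2].

Lemma fc_pr x y : fc (pr x y) = x.
Proof. by apply/ffunP => i; rewrite !ffunE. Qed.
Lemma sc_pr x y : sc (pr x y) = y.
Proof. by apply/ffunP => i; rewrite !ffunE. Qed.
Lemma pr_fcsc z : pr (fc z) (sc z) = z.
Proof. by apply/ffunP => i; rewrite !ffunE; case: (z i). Qed.

Lemma sum_P (F : P -> R) :
  \big[Rplus/0]_(y : P) F y = \big[Rplus/0]_(x1 : C) \big[Rplus/0]_(x2 : C) F (pr x1 x2).
Proof.
rewrite pair_big /= (reindex (fun q : C * C => pr q.1 q.2)) //.
apply: onW_bij; exists (fun z => (fc z, sc z)).
  by case=> x y /=; rewrite fc_pr sc_pr.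
by move=> z /=; rewrite pr_fcsc.
Qed.

Definition hh (p1 p2 : (C * C)%type) : (P * P)%type := (pr p1.1 p2.1, pr p1.2 p2.2).

Lemma sum_PP (F : (P * P)%type -> R) :
  \big[Rplus/0]_(st : (P * P)%type) F st =
  \big[Rplus/0]_(p1 : (C * C)%type) \big[Rplus/0]_(p2 : (C * C)%type) F (hh p1 p2).
Proof.
rewrite pair_big /= (reindex (fun q : ((C * C) * (C * C))%type => hh q.1 q.2)) //.
apply: onW_bij; exists (fun st => ((fc st.1, fc st.2), (sc st.1, sc st.2))).
  by case=> [[x1 y1] [x2 y2]] /=; rewrite /hh /= !fc_pr !sc_pr.
by case=> z1 z2 /=; rewrite /hh /= !pr_fcsc.
Qed.

Definition Gam (g1 g2 : meas (C * C)%type) : meas (P * P)%type :=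
  [ffun st => g1 (fc st.1, fc st.2) * g2 (sc st.1, sc st.2)].

Lemma Gam_hh g1 g2 p1 p2 : Gam g1 g2 (hh p1 p2) = g1 p1 * g2 p2.
Proof. by case: p1 p2 => [x1 y1] [x2 y2]; rewrite ffunE /hh /= !fc_pr !sc_pr. Qed.

Lemma Gam_coupling (mu mu' nu nu' : meas C) g1 g2 :
  is_coupling mu mu' g1 -> is_coupling nu nu' g2 ->
  is_coupling (prod_meas mu nu) (prod_meas mu' nu') (Gam g1 g2).
Proof.
move=> [a1 [a2 a3]] [b1 [b2 b3]]; split; [|split].
- by move=> st; rewrite ffunE; apply: Rmult_le_pos.
- move=> x; rewrite /rsum sum_P ffunE -a2 -b2 big_distrlr /=.
  apply: eq_bigr => y1 _; apply: eq_bigr => y2 _.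
  by rewrite ffunE /= fc_pr sc_pr.
- move=> y; rewrite /rsum sum_P ffunE -a3 -b3 big_distrlr /=.
  apply: eq_bigr => y1 _; apply: eq_bigr => y2 _.
  by rewrite ffunE /= fc_pr sc_pr.
Qed.



Lemma cut_val_ge0 (g : meas (C * C)%type) : 0 <= cut_val g.
Proof.
apply: bigmax_ge0 => I; apply: bigmax_ge0 => B; apply: bigmax_ge0 => w.
exact: Rabs_pos.
Qed.

Lemma term_le_cut (g : meas (C * C)%type) (I : {set 'I_n}) (B : {set (C * C)%type}) (w : Om) :
  Rabs (\big[Rplus/0]_(i in I) \big[Rplus/0]_(st in B)
              (g st * (ind ((st.1 i) == w) - ind ((st.2 i) == w)))) <= cut_val g.
Proof.
rewrite /cut_val.
apply: Rle_trans (le_bigmax _ I).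
apply: Rle_trans (le_bigmax _ B).
exact: (le_bigmax (fun w => Rabs _) w).
Qed.

Lemma abs_sum_le (X : finType) (w E : X -> R) c :
  (forall x, 0 <= w x) -> (forall x, Rabs (E x) <= c) ->
  Rabs (\big[Rplus/0]_x (w x * E x)) <= (\big[Rplus/0]_x w x) * c.
Proof.
move=> hw hE; rewrite big_distrl.
elim/big_ind2: _ => //.
- rewrite Rabs_R0; lra.
- move=> a1 a2 b1 b2 h1 h2; exact: Rle_trans (Rabs_triang _ _) (Rplus_le_compat _ _ _ _ h1 h2).
- move=> x _; change (Rabs (w x * E x) <= w x * c); rewrite Rabs_mult (Rabs_right (w x)); last by have := hw x; lra.
  apply: Rmult_le_compat_l => //; exact: hE.
Qed.

Lemma sum_coupling_1 (mu nu : meas C) g : is_coupling mu nu g -> is_prob mu ->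
  \big[Rplus/0]_(p : (C * C)%type) g p = 1.
Proof.
move=> [_ [h2 _]] [_ hm]; rewrite -hm /rsum.
rewrite [RHS](eq_bigr (fun s => \big[Rplus/0]_t g (s, t))); last by move=> s _; rewrite -h2.
by rewrite pair_big /=; apply: eq_bigr => [[s t]] _.
Qed.

Lemma sum_mulr (X : finType) (Q : pred X) a (F : X -> R) :
  a * \big[Rplus/0]_(i | Q i) F i = \big[Rplus/0]_(i | Q i) (a * F i).
Proof. exact: big_distrr. Qed.

Lemma sum_split (X : finType) (F G : X -> R) :
  \big[Rplus/0]_i (F i + G i) = \big[Rplus/0]_i F i + \big[Rplus/0]_i G i.
Proof. exact: big_split. Qed.

Lemma r1 x1 x2 x3 x4 x5 x6 x7 : x1 * (x2 * x3 * (x4 * (x5 * (x6 - x7)))) = x2 * x4 * x5 * x1 * ((x6 - x7) * x3).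
Proof. ring. Qed.
Lemma r2 x1 x2 x3 x4 x5 x6 x7 : x1 * (x2 * x3 * (x4 * (x5 * (x6 - x7)))) = x2 * x4 * x1 * x5 * (x3 * (x6 - x7)).
Proof. ring. Qed.

Lemma core (g1 g2 : meas (C * C)%type) (I : {set 'I_n}) (B : {set (P * P)%type}) (a b : Om) :
  (forall p, 0 <= g1 p) -> (forall p, 0 <= g2 p) ->
  \big[Rplus/0]_(p : (C * C)%type) g1 p = 1 -> \big[Rplus/0]_(p : (C * C)%type) g2 p = 1 ->
  Rabs (\big[Rplus/0]_(i in I) \big[Rplus/0]_(st in B)
     (Gam g1 g2 st * (ind ((st.1 i) == (a, b)) - ind ((st.2 i) == (a, b)))))
  <= cut_val g1 + cut_val g2.
Proof.
move=> g10 g20 s1 s2.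
pose E1 (p2 : (C * C)%type) := \big[Rplus/0]_(i in [set i in I | p2.1 i == b])
   \big[Rplus/0]_(st in [set p1 | hh p1 p2 \in B])
   (g1 st * (ind ((st.1 i) == a) - ind ((st.2 i) == a))).
pose E2 (p1 : (C * C)%type) := \big[Rplus/0]_(i in [set i in I | p1.2 i == a])
   \big[Rplus/0]_(st in [set p2 | hh p1 p2 \in B])
   (g2 st * (ind ((st.1 i) == b) - ind ((st.2 i) == b))).
pose Z1 (i : 'I_n) (p1 p2 : (C * C)%type) := ind (i \in I) * ind (hh p1 p2 \in B) * g1 p1 * g2 p2 *
   ((ind (p1.1 i == a) - ind (p1.2 i == a)) * ind (p2.1 i == b)).
pose Z2 (i : 'I_n) (p1 p2 : (C * C)%type) := ind (i \in I) * ind (hh p1 p2 \in B) * g1 p1 * g2 p2 *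
   (ind (p1.2 i == a) * (ind (p2.1 i == b) - ind (p2.2 i == b))).
have e0 : \big[Rplus/0]_(i in I) \big[Rplus/0]_(st in B)
     (Gam g1 g2 st * (ind ((st.1 i) == (a, b)) - ind ((st.2 i) == (a, b))))
   = \big[Rplus/0]_i \big[Rplus/0]_p1 \big[Rplus/0]_p2 (Z1 i p1 p2 + Z2 i p1 p2).
  rewrite sum_cond; apply: eq_bigr => i _.
  rewrite sum_cond sum_PP sum_mulr; apply: eq_bigr => p1 _.
  rewrite sum_mulr; apply: eq_bigr => p2 _.
  rewrite Gam_hh /Z1 /Z2; case: p1 p2 => [x1 y1] [x2 y2].
  rewrite /hh /= !ffunE !xpair_eqE !ind_and /=; ring.
have e1 : \big[Rplus/0]_p2 (g2 p2 * E1 p2) =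
    \big[Rplus/0]_i \big[Rplus/0]_p1 \big[Rplus/0]_p2 Z1 i p1 p2.
  have -> : \big[Rplus/0]_p2 (g2 p2 * E1 p2) =
      \big[Rplus/0]_p2 \big[Rplus/0]_i \big[Rplus/0]_p1 Z1 i p1 p2.
    apply: eq_bigr => p2 _; rewrite /E1 sum_cond sum_mulr; apply: eq_bigr => i _.
    rewrite sum_cond !sum_mulr; apply: eq_bigr => p1 _.
    rewrite !inE ind_and /Z1; exact: r1.
  rewrite [LHS]exchange_big; apply: eq_bigr => i _; exact: exchange_big.
have e2 : \big[Rplus/0]_p1 (g1 p1 * E2 p1) =
    \big[Rplus/0]_i \big[Rplus/0]_p1 \big[Rplus/0]_p2 Z2 i p1 p2.
  have -> : \big[Rplus/0]_p1 (g1 p1 * E2 p1) =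
      \big[Rplus/0]_p1 \big[Rplus/0]_i \big[Rplus/0]_p2 Z2 i p1 p2.
    apply: eq_bigr => p1 _; rewrite /E2 sum_cond sum_mulr; apply: eq_bigr => i _.
    rewrite sum_cond !sum_mulr; apply: eq_bigr => p2 _.
    rewrite !inE ind_and /Z2; exact: r2.
  by rewrite [LHS]exchange_big.
have eq : \big[Rplus/0]_(i in I) \big[Rplus/0]_(st in B)
     (Gam g1 g2 st * (ind ((st.1 i) == (a, b)) - ind ((st.2 i) == (a, b))))
   = \big[Rplus/0]_p2 (g2 p2 * E1 p2) + \big[Rplus/0]_p1 (g1 p1 * E2 p1).
  rewrite e0 e1 e2 -sum_split; apply: eq_bigr => i _.
  rewrite -sum_split; apply: eq_bigr => p1 _; exact: sum_split.
rewrite eq; apply: Rle_trans (Rabs_triang _ _) _.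
apply: Rplus_le_compat.
- have := @abs_sum_le _ g2 E1 (cut_val g1) g20 (fun p2 => term_le_cut _ _ _ _).
  by rewrite s2 Rmult_1_l.
- have := @abs_sum_le _ g1 E2 (cut_val g2) g10 (fun p1 => term_le_cut _ _ _ _).
  by rewrite s1 Rmult_1_l.
Qed.

Lemma cut_bound (g1 g2 : meas (C * C)%type) :
  (forall p, 0 <= g1 p) -> (forall p, 0 <= g2 p) ->
  \big[Rplus/0]_(p : (C * C)%type) g1 p = 1 -> \big[Rplus/0]_(p : (C * C)%type) g2 p = 1 ->
  cut_val (Gam g1 g2) <= cut_val g1 + cut_val g2.
Proof.
move=> h1 h2 h3 h4.
have c0 : 0 <= cut_val g1 + cut_val g2.
  have := cut_val_ge0 g1; have := cut_val_ge0 g2; lra.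
apply: bigmax_le => // I; apply: bigmax_le => // B; apply: bigmax_le => // -[a b].
exact: core.
Qed.

End Prod.

End PartA.


Section PC.
Local Open Scope R_scope.
Lemma prodc (Om : finType) (n : nat) (mu nu : meas (config Om n)) :
  is_prob mu -> is_prob nu ->
  is_coupling mu nu [ffun st => mu st.1 * nu st.2].
Proof.
move=> [m0 m1] [n0 n1]; split; [|split].
- by move=> st; rewrite ffunE; apply: Rmult_le_pos.
- move=> s; rewrite /rsum (eq_bigr (fun t => mu s * nu t)); last by move=> t _; rewrite ffunE.
  rewrite -sum_mulr; move: n1; rewrite /rsum => ->; ring.
- move=> t; rewrite /rsum (eq_bigr (fun s => mu s * nu t)); last by move=> s _; rewrite ffunE.
  rewrite -big_distrl /=; move: m1; rewrite /rsum => ->; ring.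
Qed.
End PC.

Delimit Scope R_scope with R.

Theorem lemma2p11 (Om : finType) (hOm : (1 < #|Om|)%N) (eps : R) (heps : (0 < eps)%R) :
  exists (delta : R) (n0 : nat), (0 < delta)%R /\ (0 < n0)%N /\
    forall (n : nat), (n0 < n)%N ->
    forall mu mu' nu nu' : meas (config Om n),
      is_prob mu -> is_prob mu' -> is_prob nu -> is_prob nu' ->
      (D_cut mu mu' + D_cut nu nu' < delta)%R ->
      (D_cut (prod_meas mu nu) (prod_meas mu' nu') < eps)%R.
Proof.
exists eps, 1%N; split; [exact: heps | split; [done|]].
move=> n hn mu mu' nu nu' pm pm' pn pn' hD.
have [m1 hm1] := @min_exists Om n mu mu' (ex_intro _ _ (prodc pm pm')).
have [m2 hm2] := @min_exists Om n nu nu' (ex_intro _ _ (prodc pn pn')).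
have H1 := epsilon_spec (inhabits 0%R) (is_min_cut mu mu') (ex_intro _ m1 hm1).
have H2 := epsilon_spec (inhabits 0%R) (is_min_cut nu nu') (ex_intro _ m2 hm2).
rewrite /D_cut in hD *.
set e1 := epsilon (inhabits 0%R) (is_min_cut mu mu') in hD H1.
set e2 := epsilon (inhabits 0%R) (is_min_cut nu nu') in hD H2.
move: H1 H2 => [[g1 [hg1 ce1]] _] [[g2 [hg2 ce2]] _].
have hG := Gam_coupling hg1 hg2.
have [mP hmP] := @min_exists _ n (prod_meas mu nu) (prod_meas mu' nu') (ex_intro _ _ hG).
have HP := epsilon_spec (inhabits 0%R) (is_min_cut (prod_meas mu nu) (prod_meas mu' nu')) (ex_intro _ mP hmP).
set eP := epsilon _ _ in HP *.
move: HP => [_ hmin].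
have le1 := hmin _ hG.
have le2 := cut_bound (proj1 hg1) (proj1 hg2) (sum_coupling_1 hg1 pm) (sum_coupling_1 hg2 pn).
rewrite ce1 ce2 in le2.
have n0 : (0 < INR n)%R by apply: lt_0_INR; apply/ltP; exact: ltn_trans (ltnSn 0) hn.
have ni : (0 < / INR n)%R by apply: Rinv_0_lt_compat.
have : (/ INR n * eP <= / INR n * (e1 + e2))%R.
  apply: Rmult_le_compat_l; [lra | exact: Rle_trans le1 le2].
lra.
Qed.
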